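(* Let $G$ be a simple stochastic game, $A$ a subset of the arcs of $G$, and $\sigma,\sigma'$ two positional MAX strategies. If $\sigma' \succ_{G[A,\sigma]} \sigma$, then $\sigma' >_G \sigma$.
   Context: A simple stochastic game (SSG) $G$ is a finite directed graph whose vertex set is partitioned into MAX vertices, MIN vertices, random vertices and a nonempty set of sinks; every non-sink vertex has at least one outgoing arc, every sink has exactly one outgoing arc, a self-loop; each random vertex $x$ carries a rational probability distribution $p_x$ on its out-neighbourhood, positive on every out-neighbour; each sink $s$ has rational value $\mathrm{Val}(s)\in[0,1]$. The game is not assumed to be stopping. A positional MAX (resp. MIN) strategy assigns to each MAX (resp. MIN) vertex one of its out-neighbours. Under $\sigma,\tau$ from start $x_0$, the random play moves from MAX vertex $x$ to $\sigma(x)$, from MIN vertex $x$ to $\tau(x)$, from random vertex $x$ to an out-neighbour drawn by $p_x$ independently, and stays at a sink once reached; its value is $\mathrm{Val}(s)$ if it reaches sink $s$, else $0$ (in particular if it never reaches a sink), and $v^G_{\sigma,\tau}(x_0)$ is its expectation. $v^G_\sigma:=v^G_{\sigma,\tau}$ for a best response $\tau$, i.e. a MIN strategy with $v_{\sigma,\tau}\le v_{\sigma,\tau'}$ pointwise for all MIN strategies $\tau'$ (a positional one exists). Vectors are compared pointwise: $v\ge v'$ if $v(x)\ge v'(x)$ for all $x$, and $v>v'$ if $v\ge v'$ and $v\ne v'$. We write $\sigma'>_G\sigma$ if $v^G_{\sigma'}>v^G_\sigma$, and $\sigma'\succ_G\sigma$ if $\sigma'>_G\sigma$ and, for every MAX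 vertex $x$ with $v^G_{\sigma'}(x)=v^G_\sigma(x)$, $\sigma'(x)=\sigma(x)$. Transformed game: $G[A,\sigma]$ is obtained from a copy of $G$ by replacing each arc $e=(x,y)\in A$ by an arc $(x,s_e)$ to a new sink $s_e$ of value $v^G_\sigma(y)$ (for random $x$, $p_x(s_e)=p_x(y)$); $y$ is kept. Strategies of $G$ and $G[A,\sigma]$ are identified (a MAX vertex $x$ with $\sigma(x)=y$, $(x,y)\in A$, moves to $s_{(x,y)}$), and value vectors in $G[A,\sigma]$ are compared only on the vertices of $G$. *)

(* Defs.v *)
From HB Require Import structures.
From Stdlib Require Import ClassicalEpsilon.
From mathcomp Require Import all_boot all_order all_algebra.
From mathcomp Require Import all_classical all_reals all_analysis.

Set Implicit Arguments.
Unset Strict Implicit.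
Unset Printing Implicit Defensive.

Import Order.TTheory GRing.Theory Num.Theory.
Import numFieldNormedType.Exports.
Local Open Scope ring_scope.

Inductive vkind := VMax | VMin | VRand | VSink.

Record ssg (R : realType) (V : finType) := SSG {
  sg_kind : V -> vkind;
  sg_arc : rel V;
  sg_prob : V -> V -> R;
  sg_val : V -> R }.

Definition is_rat (R : realType) (r : R) := exists q : rat, r = ratr q.

Definition wf_ssg (R : realType) (V : finType) (G : ssg R V) : Prop :=
  [/\ (exists s, sg_kind G s = VSink),
      (forall x, sg_kind G x <> VSink -> exists y, sg_arc G x y),
      (forall x, sg_kind G x = VSink -> forall y, sg_arc G x y = (y == x)),
      (forall x, sg_kind G x = VRand ->
         [/\ forall y, sg_arc G x y -> 0 < sg_prob G x y,
             forall y, ~~ sg_arc G x y -> sg_prob G x y = 0,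
             \sum_y sg_prob G x y = 1 &
             forall y, is_rat (sg_prob G x y)]) &
      (forall x, sg_kind G x = VSink -> 0 <= sg_val G x <= 1 /\ is_rat (sg_val G x))].

(* Positional strategies: functions V -> V, choosing an out-neighbour
   at every MAX (resp. MIN) vertex; other values are irrelevant. *)
Definition max_strat (R : realType) (V : finType) (G : ssg R V) (s : V -> V) :=
  forall x, sg_kind G x = VMax -> sg_arc G x (s x).
Definition min_strat (R : realType) (V : finType) (G : ssg R V) (t : V -> V) :=
  forall x, sg_kind G x = VMin -> sg_arc G x (t x).

Definition trans (R : realType) (V : finType) (G : ssg R V) (s t : V -> V)
  (x y : V) : R :=
  match sg_kind G x with
  | VMax => (s x == y)%:R
  | VMin => (t x == y)%:R
  | VRand => sg_prob G x y
  | VSink => (x == y)%:R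
  end.

(* stepval n x = expected payoff Val(s) if the play from x is at a sink s at
   time n, 0 otherwise.  Since sinks are absorbing, "at sink s at time n"
   iff "reached sink s by time n". *)
Fixpoint stepval (R : realType) (V : finType) (G : ssg R V) (s t : V -> V)
  (n : nat) (x : V) : R :=
  if n is n'.+1 then \sum_y trans G s t x y * stepval G s t n' y
  else (if sg_kind G x is VSink then sg_val G x else 0).

Definition playval (R : realType) (V : finType) (G : ssg R V) (s t : V -> V)
  (x : V) : R := limn (fun n => stepval G s t n x).

Definition best_response (R : realType) (V : finType) (G : ssg R V)
  (s t : V -> V) : Prop :=
  min_strat G t /\
  forall t', min_strat G t' -> forall x, playval G s t x <= playval G s t' x.

Definition vmax (R : realType) (V : finType) (G : ssg R V) (s : V -> V) : V -> R :=
  playval G s (epsilon (inhabits s) (best_response G s)).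

(* s' >_G s, comparing value vectors on vertices of G only (through emb). *)
Definition vgt (R : realType) (V W : finType) (emb : V -> W) (v' v : W -> R) :=
  (forall x, v (emb x) <= v' (emb x)) /\ exists x, v (emb x) != v' (emb x).

Definition better (R : realType) (V : finType) (G : ssg R V) (s' s : V -> V) :=
  vgt id (vmax G s') (vmax G s).

Definition arcsA (V : finType) (A : {set V * V}) := {e : V * V | e \in A}.

Definition tvert (V : finType) (A : {set V * V}) := (V + arcsA A)%type.

Definition tgame (R : realType) (V : finType) (G : ssg R V) (A : {set V * V})
  (s : V -> V) : ssg R (tvert A) :=
  {| sg_kind := fun u => match u with inl x => sg_kind G x | inr _ => VSink end;
     sg_arc := fun u w => match u, w with
       | inl x, inl y => sg_arc G x y && ((x, y) \notin A)
       | inl x, inr e => (val e).1 == x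
       | inr e, inr e' => e == e'
       | inr _, inl _ => false end;
     sg_prob := fun u w => match u, w with
       | inl x, inl y => if (x, y) \in A then 0 else sg_prob G x y
       | inl x, inr e => if (val e).1 == x then sg_prob G x (val e).2 else 0
       | inr _, _ => 0 end;
     sg_val := fun u => match u with
       | inl x => sg_val G x
       | inr e => vmax G s (val e).2 end |}.

Definition tstrat (V : finType) (A : {set V * V}) (s : V -> V) :
    tvert A -> tvert A :=
  fun u => match u with
  | inl x => match insub (x, s x) with
             | Some e => inr e
             | None => inl (s x) end
  | inr e => inr e end.

Arguments tstrat {V} A s.

Definition tsucc (R : realType) (V : finType) (G : ssg R V) (A : {set V * V})
  (s' s : V -> V) :=
  let GA := tgame G A s in
  vgt inl (vmax GA (tstrat A s')) (vmax GA (tstrat A s)) /\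
  forall x, sg_kind G x = VMax ->
    vmax GA (tstrat A s') (inl x) = vmax GA (tstrat A s) (inl x) ->
    s' x = s x.

(* Main.v *)
Require Import Defs.
From Stdlib Require Import ClassicalEpsilon.
From mathcomp Require Import all_boot all_order all_algebra.
From mathcomp Require Import all_classical all_reals all_analysis.

Unset Printing Implicit Defensive.

Import Order.TTheory GRing.Theory Num.Theory.
Import numFieldNormedType.Exports.
Local Open Scope ring_scope.
Local Open Scope classical_set_scope.
Local Open Scope ring_scope.
Section Gen.
Variables (R : realType) (V : finType) (H : ssg R V).

Definition goodg := [/\ forall x, sg_kind H x = VRand ->
      (forall y, 0 <= sg_prob H x y) /\ \sum_y sg_prob H x y = 1,
   forall x, sg_kind H x = VSink -> 0 <= sg_val H x <= 1 &
   forall x, sg_kind H x = VMin -> exists y, sg_arc H x y].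

Lemma sum_pick (a : V) (f : V -> R) : \sum_y (a == y)%:R * f y = f a.
Proof.
rewrite (bigD1 a) //= eqxx mul1r big1 ?addr0 // => y.
by rewrite eq_sym => /negbTE ->; rewrite mul0r.
Qed.

Lemma sum_pick1 (a : V) : \sum_y ((a == y)%:R : R) = 1.
Proof.
rewrite (bigD1 a) //= eqxx big1 ?addr0 // => y.
by rewrite eq_sym => /negbTE ->.
Qed.

Lemma trans_MAX s t x f : sg_kind H x = VMax ->
  \sum_y trans H s t x y * f y = f (s x).
Proof. by move=> Hx; rewrite /trans Hx sum_pick. Qed.
Lemma trans_MIN s t x f : sg_kind H x = VMin ->
  \sum_y trans H s t x y * f y = f (t x).
Proof. by move=> Hx; rewrite /trans Hx sum_pick. Qed.
Lemma trans_SINK s t x f : sg_kind H x = VSink ->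
  \sum_y trans H s t x y * f y = f x.
Proof. by move=> Hx; rewrite /trans Hx sum_pick. Qed.
Lemma trans_RAND s t x f : sg_kind H x = VRand ->
  \sum_y trans H s t x y * f y = \sum_y sg_prob H x y * f y.
Proof. by move=> Hx; rewrite /trans Hx. Qed.

Lemma trans_nonmin s t1 t2 x y : sg_kind H x <> VMin ->
  trans H s t1 x y = trans H s t2 x y.
Proof. by rewrite /trans; case: (sg_kind H x). Qed.
Lemma trans_nonmax s1 s2 t x y : sg_kind H x <> VMax ->
  trans H s1 t x y = trans H s2 t x y.
Proof. by rewrite /trans; case: (sg_kind H x). Qed.
Lemma trans_teq s t1 t2 x y : t1 x = t2 x ->
  trans H s t1 x y = trans H s t2 x y.
Proof. by rewrite /trans => ->. Qed.
Lemma trans_seq s1 s2 t x y : s1 x = s2 x ->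
  trans H s1 t x y = trans H s2 t x y.
Proof. by rewrite /trans => ->. Qed.

Hypothesis gH : goodg.

Lemma trans_ge0 s t x y : 0 <= trans H s t x y.
Proof.
case: gH => Hr _ _; rewrite /trans; case E: (sg_kind H x) => //; try exact: ler0n.
exact: (Hr x E).1.
Qed.

Lemma sum_trans s t x : \sum_y trans H s t x y = 1.
Proof.
case: gH => Hr _ _; rewrite /trans; case E: (sg_kind H x); try exact: sum_pick1.
exact: (Hr x E).2.
Qed.

Lemma sv_ge0 s t n x : 0 <= stepval H s t n x.
Proof.
elim: n x => [|n IH] x /=.
  case E: (sg_kind H x) => //; case: gH => _ Hs _; by case/andP: (Hs x E).
by apply: sumr_ge0 => y _; apply: mulr_ge0 (trans_ge0 _ _ _ _) (IH y).
Qed.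

Lemma sv_le1 s t n x : stepval H s t n x <= 1.
Proof.
elim: n x => [|n IH] x /=.
  case E: (sg_kind H x) => //; try exact: ler01; case: gH => _ Hs _; by case/andP: (Hs x E).
apply: (@le_trans _ _ (\sum_y trans H s t x y * 1)).
  by apply: ler_sum => y _; apply: ler_wpM2l; [exact: trans_ge0 | exact: IH].
under eq_bigr do rewrite mulr1.
by rewrite sum_trans.
Qed.

Lemma sv_sink s t n x : sg_kind H x = VSink -> stepval H s t n x = sg_val H x.
Proof.
move=> Hx; elim: n => [|n IH] /=; first by rewrite Hx.
by rewrite trans_SINK.
Qed.

Lemma sv_step s t n x : stepval H s t n x <= stepval H s t n.+1 x.
Proof.
elim: n x => [|n IH] x.
  case E: (sg_kind H x); last by rewrite !sv_sink.
  1-3: by rewrite [X in X <= _]/= E; apply: sv_ge0.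
rewrite [X in X <= _]/= [X in _ <= X]/=.
by apply: ler_sum => y _; apply: ler_wpM2l; [exact: trans_ge0 | exact: IH].
Qed.

Lemma pv_cvg s t x : (fun n => stepval H s t n x) @ \oo --> playval H s t x.
Proof.
have Hc : cvgn (fun n => stepval H s t n x).
  apply: cvgP; apply: nondecreasing_cvgn.
    by apply/nondecreasing_seqP => n; apply: sv_step.
  by exists 1 => _ [n _ <-]; apply: sv_le1.
exact: Hc.
Qed.

Lemma pv_le s t x m : (forall n, stepval H s t n x <= m) -> playval H s t x <= m.
Proof.
move=> Hn; apply: cvgr_to_le (pv_cvg s t x) _.
exact: nearW.
Qed.

Lemma pv_ge s t x m : (forall n, m <= stepval H s t n x) -> m <= playval H s t x.
Proof.
move=> Hn; apply: cvgr_to_ge (pv_cvg s t x) _.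
exact: nearW.
Qed.

Lemma pv_ge0 s t x : 0 <= playval H s t x.
Proof. by apply: pv_ge => n; apply: sv_ge0. Qed.
Lemma pv_le1 s t x : playval H s t x <= 1.
Proof. by apply: pv_le => n; apply: sv_le1. Qed.
Lemma pv_sink s t x : sg_kind H x = VSink -> playval H s t x = sg_val H x.
Proof.
move=> Hx; apply: le_anti; apply/andP; split.
  by apply: pv_le => n; rewrite sv_sink.
by apply: pv_ge => n; rewrite sv_sink.
Qed.

Lemma pv_fix s t x :
  playval H s t x = \sum_y trans H s t x y * playval H s t y.
Proof.
have h1 : (fun n => stepval H s t n.+1 x) @ \oo --> playval H s t x.
  by have := pv_cvg s t x; rewrite -cvg_shiftS.
have h2 : (fun n => stepval H s t n.+1 x) @ \oo -->
           \sum_y trans H s t x y * playval H s t y.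
  rewrite /=.
  apply: (@cvg_big _ _ +%R 0 xpredT add_continuous).
  move=> y _; apply: cvgMl_tmp; exact: pv_cvg.
exact: (cvg_unique _ h1 h2).
Qed.

Lemma pv_super s t (m : V -> R) :
  (forall x, 0 <= m x) -> (forall x, sg_kind H x = VSink -> sg_val H x <= m x) ->
  (forall x, \sum_y trans H s t x y * m y <= m x) ->
  forall x, playval H s t x <= m x.
Proof.
move=> H0 Hs Hsup.
have Hn : forall n x, stepval H s t n x <= m x.
  elim=> [|n IH] x /=.
    by case E: (sg_kind H x); [exact: H0|exact: H0|exact: H0|exact: Hs].
  apply: le_trans (Hsup x).
  by apply: ler_sum => y _; apply: ler_wpM2l; [exact: trans_ge0 | exact: IH].
by move=> x; apply: pv_le => n; apply: Hn.
Qed.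

Lemma pv_closed s t (K : V -> Prop) :
  (forall x, K x -> sg_kind H x <> VSink) ->
  (forall x y, K x -> trans H s t x y != 0 -> K y) ->
  forall x, K x -> playval H s t x = 0.
Proof.
move=> Kns Kcl.
have Hn : forall n x, K x -> stepval H s t n x = 0.
  elim=> [|n IH] x Kx /=.
    by case E: (sg_kind H x) => //; case: (Kns x Kx).
  apply: big1 => y _; case: (eqVneq (trans H s t x y) 0) => [->|ne].
    by rewrite mul0r.
  by rewrite (IH y (Kcl x y Kx ne)) mulr0.
move=> x Kx; apply: le_anti; apply/andP; split; last exact: pv_ge0.
by apply: pv_le => n; rewrite Hn.
Qed.


Definition isminb (k : vkind) := if k is VMin then true else false.

Lemma br_ex s : exists t, best_response H s t.
Proof.
pose P := fun f : {ffun V -> V} =>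
  [forall x, isminb (sg_kind H x) ==> sg_arc H x (f x)].
have PP : forall f, P f <-> min_strat H f.
  move=> f; split.
    by move/forallP=> Hf x Hx; move: (Hf x); rewrite Hx.
  move=> Hf; apply/forallP => x; case E: (sg_kind H x) => //=; exact: Hf.
pose f0 := [ffun x => odflt x [pick y | sg_arc H x y]].
have P0 : P f0.
  apply/PP => x Hx; rewrite ffunE; case: pickP => [y //|Hn].
  case: gH => _ _ Hm; have [y Hy] := Hm x Hx; by rewrite Hn in Hy.
pose F := fun f : {ffun V -> V} => \sum_x playval H s f x.
case: (arg_minP F P0) => fs Pfs Hmin.
exists fs; split; first by apply/PP.
move=> t' Ht' x; rewrite leNgt; apply/negP => Hlt.
pose g := [ffun z => if playval H s t' z < playval H s fs z then t' z else fs z].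
have Pg : P g.
  apply/PP => z Hz; rewrite ffunE; case: ifP => _; first exact: Ht'.
  exact: (proj1 (PP fs) Pfs z Hz).
pose m := fun z => Num.min (playval H s fs z) (playval H s t' z).
have Hg : forall z, playval H s g z <= m z.
  apply: pv_super => //.
  - by move=> z; rewrite /m le_min !pv_ge0.
  - by move=> z Hz; rewrite /m le_min !(pv_sink _ _ _ Hz) lexx.
  move=> z; case E: (sg_kind H z).
  2: { rewrite trans_MIN // /g ffunE; case: ifP => Hc; rewrite /m.
       - rewrite [X in _ <= X]min_r; last exact: ltW.
         rewrite ge_min; apply/orP; right.
         by rewrite [X in _ <= X]pv_fix trans_MIN.
       - rewrite [X in _ <= X]min_l; last by rewrite leNgt Hc.
         rewrite ge_min; apply/orP; left.
         by rewrite [X in _ <= X]pv_fix trans_MIN. }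
  1-3: rewrite /m le_min; apply/andP; split;
    rewrite [X in _ <= X]pv_fix; apply: ler_sum => y _.
  1-6: rewrite ?(trans_nonmin s g fs) ?(trans_nonmin s t' fs) ?E //.
  1-6: apply: ler_wpM2l; first exact: trans_ge0.
  1-6: by rewrite ge_min lexx ?orbT.
have Hlt2 : F g < F fs.
  rewrite /F (bigD1 x) //= [X in _ < X](bigD1 x) //=.
  apply: ltr_leD.
    apply: le_lt_trans (Hg x) _; apply: le_lt_trans Hlt.
    by rewrite /m ge_min lexx orbT.
  apply: ler_sum => z _; apply: le_trans (Hg z) _.
  by rewrite /m ge_min lexx.
by move: (Hmin g Pg); rewrite leNgt Hlt2.
Qed.
Definition bs s := epsilon (inhabits s) (best_response H s).

Lemma bs_br s : best_response H s (bs s).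
Proof. exact: epsilon_spec (br_ex s). Qed.

Lemma vmaxE s : vmax H s = playval H s (bs s).
Proof. by []. Qed.

Lemma vm_fix s x : vmax H s x = \sum_y trans H s (bs s) x y * vmax H s y.
Proof. exact: pv_fix. Qed.

Lemma vm_MAX s x : sg_kind H x = VMax -> vmax H s x = vmax H s (s x).
Proof. by move=> Hx; rewrite vm_fix trans_MAX. Qed.

Lemma vm_RAND s x : sg_kind H x = VRand ->
  vmax H s x = \sum_y sg_prob H x y * vmax H s y.
Proof. by move=> Hx; rewrite vm_fix trans_RAND. Qed.

Lemma vm_MINbs s x : sg_kind H x = VMin ->
  vmax H s x = vmax H s (bs s x) /\ sg_arc H x (bs s x).
Proof.
move=> Hx; split; first by rewrite vm_fix trans_MIN.
exact: (bs_br s).1.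
Qed.

Lemma vm_sink s x : sg_kind H x = VSink -> vmax H s x = sg_val H x.
Proof. exact: pv_sink. Qed.

Lemma vm_ge0 s x : 0 <= vmax H s x.
Proof. exact: pv_ge0. Qed.

Lemma vm_le1 s x : vmax H s x <= 1.
Proof. exact: pv_le1. Qed.

Lemma vm_resp s t : min_strat H t -> forall x, vmax H s x <= playval H s t x.
Proof. by move=> Ht x; apply: (bs_br s).2. Qed.

Lemma vm_min s x y : sg_kind H x = VMin -> sg_arc H x y -> vmax H s x <= vmax H s y.
Proof.
move=> Hx Hxy; rewrite leNgt; apply/negP => Hlt.
pose t' := fun z => if z == x then y else bs s z.
have Ht' : min_strat H t'.
  by move=> z Hz; rewrite /t'; case: eqP => [->|_] //; apply: (bs_br s).1.
pose m := fun z => if z == x then vmax H s y else vmax H s z.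
have Hyx : y != x.
  by apply/eqP => e; move: Hlt; rewrite e ltxx.
have : playval H s t' x <= m x.
  apply: pv_super.
  - by move=> z; rewrite /m; case: ifP => _; apply: vm_ge0.
  - move=> z Hz; rewrite /m; case: eqP => [e|_]; last by rewrite vm_sink.
    by move: Hz; rewrite e Hx.
  move=> z; case: (eqVneq z x) => [->|nzx].
    by rewrite trans_MIN // /t' eqxx /m (negbTE Hyx) eqxx.
  rewrite /m (negbTE nzx) [X in _ <= X]vm_fix; apply: ler_sum => w _.
  rewrite (trans_teq s t' (bs s)); last by rewrite /t' (negbTE nzx).
  apply: ler_wpM2l; first exact: trans_ge0.
  by case: eqP => [->|_]; [exact: ltW|].
rewrite /m eqxx => Hle.
have Hge := vm_resp s t' Ht' x.
by move: (le_lt_trans (le_trans Hge Hle) Hlt); rewrite ltxx.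
Qed.

Lemma vm_le s (m : V -> R) :
  (forall x, 0 <= m x) ->
  (forall x, sg_kind H x = VSink -> sg_val H x <= m x) ->
  (forall x, sg_kind H x = VMax -> m (s x) <= m x) ->
  (forall x, sg_kind H x = VRand -> \sum_y sg_prob H x y * m y <= m x) ->
  (forall x, sg_kind H x = VMin -> exists y, sg_arc H x y /\ m y <= m x) ->
  forall x, vmax H s x <= m x.
Proof.
move=> H0 Hs Hmax Hr Hmin.
pose t := fun x => odflt x [pick y | sg_arc H x y && (m y <= m x)].
have Ht : min_strat H t.
  move=> z Hz; rewrite /t; case: pickP => [y /andP[] //|Hn].
  by have [y [h1 h2]] := Hmin z Hz; move: (Hn y); rewrite h1 h2.
move=> x; apply: le_trans (vm_resp s t Ht x) _.
apply: pv_super => // z; case E: (sg_kind H z).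
- by rewrite trans_MAX //; apply: Hmax.
- rewrite trans_MIN // /t; case: pickP => [y /andP[_ ->] //|Hn].
  by have [y [h1 h2]] := Hmin z E; move: (Hn y); rewrite h1 h2.
- by rewrite trans_RAND //; apply: Hr.
- by rewrite trans_SINK.
Qed.

Lemma avg_eq (p f : V -> R) c :
  (forall w, 0 <= p w) -> \sum_w p w = 1 ->
  (forall w, p w != 0 -> f w <= c) -> c <= \sum_w p w * f w ->
  forall w, p w != 0 -> f w = c.
Proof.
move=> p0 p1 fc cle w pw.
have h : forall w, 0 <= p w * (c - f w).
  move=> w'; case: (eqVneq (p w') 0) => [->|ne]; first by rewrite mul0r.
  by apply: mulr_ge0 => //; rewrite subr_ge0; apply: fc.
have hs : \sum_w p w * (c - f w) = 0.
  apply: le_anti; apply/andP; split; last by apply: sumr_ge0.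
  under eq_bigr do rewrite mulrBr.
  by rewrite sumrB -big_distrl /= p1 mul1r subr_le0.
have := psumr_eq0P (fun i _ => h i) hs (i := w) isT.
move/eqP; rewrite mulf_eq0 (negbTE pw) /= subr_eq0 => /eqP ->.
by [].
Qed.

End Gen.

Arguments goodg {R V}.
Arguments sum_trans {R V H} gH s t x.
Arguments trans_ge0 {R V H} gH s t x y.
Arguments pv_closed {R V H} gH s t K.
Arguments pv_fix {R V H} gH s t x.
Arguments bs {R V}.
Arguments bs_br {R V H} gH s.
Arguments vm_fix {R V H} gH s x.
Arguments vm_MAX {R V H} gH s x.
Arguments vm_RAND {R V H} gH s x.
Arguments vm_MINbs {R V H} gH s x.
Arguments vm_sink {R V H} gH s x.
Arguments vm_ge0 {R V H} gH s x.
Arguments vm_le1 {R V H} gH s x.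
Arguments vm_resp {R V H} gH s t.
Arguments vm_min {R V H} gH s x y.
Arguments vm_le {R V H} gH s m.
Arguments avg_eq {R V} p f c.
Arguments trans_seq {R V H} s1 s2 t x y.
Arguments trans_nonmax {R V H} s1 s2 t x y.
Arguments trans_nonmin {R V H} s t1 t2 x y.
Arguments trans_MAX {R V H} s t x f.
Arguments trans_MIN {R V H} s t x f.
Arguments trans_RAND {R V H} s t x f.
Arguments trans_SINK {R V H} s t x f.
Section TG.
Variables (R : realType) (V : finType) (G : ssg R V) (A : {set V * V}).
Hypothesis wfG : wf_ssg G.

Lemma good_wf : goodg G.
Proof.
case: wfG => _ Hnz _ Hr Hv; split.
- move=> x Hx; have [Hp Hz Hs _] := Hr x Hx; split => // y.
  by case: (boolP (sg_arc G x y)) => h; [exact: ltW (Hp y h) | rewrite Hz].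
- by move=> x Hx; exact: (Hv x Hx).1.
- by move=> x Hx; apply: Hnz; rewrite Hx.
Qed.

Lemma tstrat_cases (s0 : V -> V) x :
  (exists2 e : arcsA A, tstrat A s0 (inl x) = inr e & val e = (x, s0 x)) \/
  (tstrat A s0 (inl x) = inl (s0 x) /\ (x, s0 x) \notin A).
Proof.
rewrite /tstrat; case: insubP => [e He Hv|Hn]; first by left; exists e.
by right.
Qed.

Lemma sum_arcs (F : V -> R) x :
  \sum_(e : arcsA A) (if (val e).1 == x then F (val e).2 else 0) =
  \sum_y (if (x, y) \in A then F y else 0).
Proof.
have -> : \sum_(e : arcsA A) (if (val e).1 == x then F (val e).2 else 0) =
          \sum_(e in A) (if e.1 == x then F e.2 else 0).
  by rewrite (big_sub A (fun e => if e.1 == x then F e.2 else 0)).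
rewrite big_mkcond /=.
rewrite (eq_bigr (fun e => (fun a b => if (a, b) \in A then
    (if a == x then F b else 0) else 0) e.1 e.2)); last by case.
rewrite -(pair_bigA _ (fun a b => if (a, b) \in A then
    (if a == x then F b else 0) else 0)) /= (bigD1 x) //=.
rewrite [X in _ + X]big1 ?addr0.
  by apply: eq_bigr => b _; rewrite eqxx.
move=> a Ha; apply: big1 => b _; rewrite (negbTE Ha); by case: ifP.
Qed.

Lemma GA_rand s (f : tvert A -> R) (g : V -> R) x :
  (forall e, f (inr e) = g (val e).2) ->
  \sum_w sg_prob (tgame G A s) (inl x) w * f w =
  \sum_y sg_prob G x y * (if (x, y) \in A then g y else f (inl y)).
Proof.
move=> Hf; rewrite big_sumType /=.
have -> : \sum_(e : arcsA A) (if (val e).1 == x then sg_prob G x (val e).2 else 0) * f (inr e)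
   = \sum_(e : arcsA A) (if (val e).1 == x then sg_prob G x (val e).2 * g (val e).2 else 0).
  by apply: eq_bigr => e _; rewrite Hf; case: ifP => _; rewrite ?mul0r.
rewrite (sum_arcs (fun y => sg_prob G x y * g y)) -big_split /=.
by apply: eq_bigr => y _; case: ifP => _; rewrite ?mul0r ?add0r ?addr0.
Qed.

Lemma good_tg s : goodg (tgame G A s).
Proof.
have gG := good_wf.
split.
- case=> [x|e] //= Hx; split.
    case=> [y|e] /=; first by case: ifP => _ //; case: gG => Hr _ _; exact: (Hr x Hx).1.
    by case: ifP => _ //; case: gG => Hr _ _; exact: (Hr x Hx).1.
  transitivity (\sum_w sg_prob (tgame G A s) (inl x) w * 1).
    by apply: eq_bigr => w _; rewrite mulr1.
  rewrite (GA_rand s (fun _ => 1 : R) (fun _ => 1 : R)) //.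
  under eq_bigr do rewrite if_same mulr1.
  by case: gG => Hr _ _; exact: (Hr x Hx).2.
- case=> [x|e] /= Hx; first by case: gG => _ Hs _; exact: Hs.
  by rewrite vm_ge0 // vm_le1.
- case=> [x|e] //= Hx; case: gG => _ _ Hm; have [y Hy] := Hm x Hx.
  case: (boolP ((x, y) \in A)) => Hin.
    by exists (inr (exist _ (x, y) Hin)) => /=.
  by exists (inl y); rewrite /= Hy Hin.
Qed.

End TG.

Arguments good_wf {R V G} wfG.
Arguments tstrat_cases {V A} s0 x.
Arguments GA_rand {R V G A} s f g x.
Arguments good_tg {R V G} A wfG s.
Theorem proposition18 (R : realType) (V : finType) (G : ssg R V)
  (A : {set V * V}) (s s' : V -> V) :
  wf_ssg G ->
  (forall e, e \in A -> sg_arc G e.1 e.2) ->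
  max_strat G s -> max_strat G s' ->
  tsucc G A s' s ->
  better G s' s.
Proof.
move=> wfG HA _ _ [[Hle [x0 Hne]] Heq].
have gG := good_wf wfG.
set GA := tgame G A s.
have gA : goodg GA := good_tg A wfG s.
set v := vmax G s.
set u := vmax GA (tstrat A s).
set u' := vmax GA (tstrat A s').
set v' := vmax G s'.
set tau' := bs G s'.
have Hvinr : forall s0 e, vmax GA s0 (inr e) = v (val e).2.
  by move=> s0 e; rewrite (vm_sink gA).
have ha : forall x, u (inl x) <= v x.
  move=> x.
  apply: (vm_le gA (tstrat A s)
     (fun w => match w with inl y => v y | inr e => v (val e).2 end)).
  - by case=> [y|e] /=; apply: (vm_ge0 gG).
  - case=> [y|e] /= Hk; last exact: lexx.
    by rewrite /v (vm_sink gG).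
  - case=> [y|e] Hk //.
    case: (tstrat_cases (A:=A) s y) => [[e' -> He]|[-> _]] /=; rewrite ?He /=;
      by rewrite [X in _ <= X](vm_MAX gG s y Hk).
  - case=> [y|e] //= Hk.
    rewrite (GA_rand s _ v) //.
    under eq_bigr do rewrite if_same.
    by rewrite /v [X in _ <= X](vm_RAND gG s y Hk).
  - case=> [y|e] //= Hk.
    have [e1 e2] := vm_MINbs gG s y Hk.
    case: (boolP ((y, bs G s y) \in A)) => Hin.
      by exists (inr (exist _ (y, bs G s y) Hin)); rewrite /= eqxx /v e1.
    by exists (inl (bs G s y)); rewrite /= e2 Hin /v e1.
have hb : forall x, v x <= u (inl x).
  apply: (vm_le gG s (fun y => u (inl y))).
  - by move=> y; apply: (vm_ge0 gA).
  - by move=> y Hk; rewrite /u (vm_sink gA).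
  - move=> y Hk; rewrite /u [X in _ <= X](vm_MAX gA _ (inl y) Hk).
    case: (tstrat_cases (A:=A) s y) => [[e -> He]|[-> _]]; last exact: lexx.
    by rewrite Hvinr He; apply: ha.
  - move=> y Hk; rewrite /u [X in _ <= X](vm_RAND gA _ (inl y) Hk).
    rewrite (GA_rand s _ v); last by move=> e; rewrite Hvinr.
    apply: ler_sum => w _; apply: ler_wpM2l.
      by case: gG => Hr _ _; apply: (Hr y Hk).1.
    by case: ifP => _; [apply: ha | apply: lexx].
  - move=> y Hk.
    have := vm_MINbs gA (tstrat A s) (inl y) Hk.
    case: (bs GA (tstrat A s) (inl y)) => [z|e] /= [e1 e2].
      by exists z; case/andP: e2 => -> _; rewrite /u e1.
    exists (val e).2; split.
      by have := HA (val e) (valP e); rewrite (eqP e2).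
    by rewrite /u e1 Hvinr; apply: ha.
have hu : forall x, u (inl x) = v x.
  by move=> x; apply: le_anti; rewrite ha hb.
have hvu' : forall x, v x <= u' (inl x).
  by move=> x; apply: le_trans (hb x) (Hle x).
have Htau' : min_strat G tau' := (bs_br gG s').1.
have hsub : forall x, u' (inl x) <= \sum_y trans G s' tau' x y * u' (inl y).
  move=> x; case E: (sg_kind G x).
  - rewrite trans_MAX // /u' (vm_MAX gA _ (inl x) E).
    case: (tstrat_cases (A:=A) s' x) => [[e -> He]|[-> _]]; last exact: lexx.
    by rewrite Hvinr He; apply: hvu'.
  - rewrite trans_MIN //.
    have Harc : sg_arc G x (tau' x) := Htau' x E.
    case: (boolP ((x, tau' x) \in A)) => Hin.
      apply: le_trans (vm_min gA _ (inl x) (inr (exist _ (x, tau' x) Hin)) E _) _.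
        by rewrite /= eqxx.
      by rewrite Hvinr; apply: hvu'.
    by apply: (vm_min gA _ (inl x) (inl (tau' x)) E); rewrite /= Harc Hin.
  - rewrite trans_RAND // /u' (vm_RAND gA _ (inl x) E).
    rewrite (GA_rand s _ v); last by move=> e; rewrite Hvinr.
    apply: ler_sum => w _; apply: ler_wpM2l.
      by case: gG => Hr _ _; apply: (Hr x E).1.
    by case: ifP => _; [apply: hvu' | apply: lexx].
  - by rewrite trans_SINK //; apply: lexx.
have hd : forall x, u' (inl x) <= v' x.
  move=> x; rewrite leNgt; apply/negP => Hx.
  pose d := fun y => u' (inl y) - v' y.
  case: (arg_maxP d (i0 := x) (P := xpredT) isT) => xm _ Hmax.
  pose c := d xm.
  have c_pos : 0 < c.
    apply: lt_le_trans (Hmax x isT); by rewrite /d subr_gt0.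
  pose K := fun y => d y = c.
  have Kns : forall y, K y -> sg_kind G y <> VSink.
    move=> y Ky Hs; move: c_pos; rewrite -Ky /d /u' /v'.
    by rewrite (vm_sink gA _ (inl y)) // (vm_sink gG _ y) // subrr ltxx.
  have Kcl : forall y w, K y -> trans G s' tau' y w != 0 -> K w.
    move=> y w Ky Hw.
    apply: (avg_eq (trans G s' tau' y) d c) => //.
    - by move=> w'; apply: trans_ge0.
    - exact: sum_trans.
    - by move=> w' _; apply: Hmax.
    rewrite -[X in X <= _]Ky /d.
    under eq_bigr do rewrite mulrBr.
    rewrite sumrB [X in _ <= _ - X](_ : _ = v' y); last first.
      by rewrite /v' [in RHS](vm_fix gG).
    by rewrite lerD2r; apply: hsub.
  have Kv' : forall y, K y -> v' y = 0.
    exact: (pv_closed gG s' tau' K Kns Kcl).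
  have Kz : forall y, K y -> u' (inl y) = c.
    by move=> y Ky; have := Ky; rewrite /K /d Kv' // subr0.
  have Kxm : K xm by [].
  case: (pselect (exists y, K y /\ v y = c)) => [[y0 [Ky0 Hv0]]|Hno].
  - pose K0 := fun y => K y /\ v y = c.
    have K0ns : forall y, K0 y -> sg_kind G y <> VSink.
      by move=> y [Ky _]; apply: Kns.
    have K0cl : forall y w, K0 y -> trans G s tau' y w != 0 -> K0 w.
      move=> y w [Ky Hvy] Hw.
      case E: (sg_kind G y).
      + have Hss : s' y = s y.
          by apply: Heq => //; change (u' (inl y) = u (inl y)); rewrite Kz // hu Hvy.
        have Hw' : trans G s' tau' y w != 0 by rewrite (trans_seq s' s tau' y w Hss).
        split; first exact: Kcl Hw'.
        move: Hw; rewrite /trans E; case: (s y =P w) => [<- _|_]; last by rewrite eqxx.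
        by rewrite -Hvy /v -(vm_MAX gG s y E).
      + have Hw' : trans G s' tau' y w != 0.
          by rewrite (trans_nonmax s' s) // E.
        have Kw := Kcl y w Ky Hw'.
        split => //.
        have Hwt : tau' y = w.
          by move: Hw; rewrite /trans E; case: (tau' y =P w) => [//|_]; rewrite eqxx.
        rewrite -Hwt in Kw *.
        apply: le_anti; apply/andP; split.
          by rewrite -(Kz _ Kw); apply: hvu'.
        by rewrite -Hvy; apply: (vm_min gG s y (tau' y) E (Htau' y E)).
      + have Kw : K w.
          by apply: (Kcl y w Ky); rewrite (trans_nonmax s' s) // E.
        split => //.
        have Hw2 : sg_prob G y w != 0 by move: Hw; rewrite /trans E.
        apply: (avg_eq (sg_prob G y) v c) => //.
        - by case: gG => Hr _ _; apply: (Hr y E).1.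
        - by case: gG => Hr _ _; apply: (Hr y E).2.
        - move=> w' Hw'; rewrite -(Kz w'); first exact: hvu'.
          by apply: (Kcl y w' Ky); rewrite /trans E.
        by rewrite -Hvy /v (vm_RAND gG s y E).
      + by case: (Kns y Ky).
    have h0 := pv_closed gG s tau' K0 K0ns K0cl y0 (conj Ky0 Hv0).
    have := vm_resp gG s tau' Htau' y0; rewrite -/v Hv0 h0 => hc.
    by move: (lt_le_trans c_pos hc); rewrite ltxx.
  - have Klt : forall y, K y -> v y < c.
      move=> y Ky; rewrite lt_neqAle; apply/andP; split.
        by apply/eqP => e; apply: Hno; exists y.
      by rewrite -(Kz y Ky); apply: hvu'.
    pose tA := tstrat A tau'.
    have HtA : min_strat GA tA.
      case=> [x'|e] Hk //.
      rewrite /tA; case: (tstrat_cases (A:=A) tau' x') => [[e -> He]|[-> Hn]].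
        by rewrite /= He eqxx.
      by rewrite /= Hn andbT; apply: Htau'.
    pose KA := fun w : tvert A => match w with inl y => K y | inr _ => False end.
    have KAns : forall w, KA w -> sg_kind GA w <> VSink.
      by case=> [y|e] //= Ky; apply: Kns.
    have KAcl : forall w1 w2, KA w1 -> trans GA (tstrat A s') tA w1 w2 != 0 -> KA w2.
      case=> [y|e] w2 //= Ky.
      have Hk1 : forall z, trans G s' tau' y z != 0 -> K z.
        by move=> z; apply: Kcl.
      case E: (sg_kind G y).
      + rewrite /trans [sg_kind GA (inl y)]/= E.
        have hM := vm_MAX gA (tstrat A s') (inl y) E.
        case: (tstrat_cases (A:=A) s' y) hM => [[e -> He]|[-> _]] hM.
          exfalso.
          have Ks : K (s' y) by apply: Hk1; rewrite /trans E eqxx pnatr_eq0.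
          move: hM; rewrite Hvinr He /= -/u' (Kz y Ky) => hc.
          by move: (Klt _ Ks); rewrite -hc ltxx.
        case: (inl (s' y) =P w2) => [<- _|_]; last by rewrite eqxx.
        by apply: Hk1; rewrite /trans E eqxx pnatr_eq0.
      + rewrite /trans [sg_kind GA (inl y)]/= E /tA.
        case: (tstrat_cases (A:=A) tau' y) => [[e -> He]|[-> _]].
          exfalso.
          have Ks : K (tau' y) by apply: Hk1; rewrite /trans E eqxx pnatr_eq0.
          have := vm_min gA (tstrat A s') (inl y) (inr e) E.
          rewrite /= He eqxx Hvinr He /= -/u' (Kz y Ky) => hc.
          by move: (le_lt_trans (hc isT) (Klt _ Ks)); rewrite ltxx.
        case: (inl (tau' y) =P w2) => [<- _|_]; last by rewrite eqxx.
        by apply: Hk1; rewrite /trans E eqxx pnatr_eq0.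
      + rewrite /trans [sg_kind GA (inl y)]/= E.
        case: w2 => [z|e] /=.
          case: ifP => _; first by rewrite eqxx.
          by move=> hz; apply: Hk1; rewrite /trans E.
        case: ifP => [h1|_]; last by rewrite eqxx.
        move=> hp; exfalso.
        pose f := fun z => if (y, z) \in A then v z else u' (inl z).
        have hf : forall z, sg_prob G y z != 0 -> f z <= c.
          move=> z hz; have Kz' : K z by apply: Hk1; rewrite /trans E.
          rewrite /f; case: ifP => _; first exact: ltW (Klt _ Kz').
          by rewrite (Kz z Kz').
        have p0 : forall z, 0 <= sg_prob G y z.
          by case: gG => Hr _ _; apply: (Hr y E).1.
        have p1 : \sum_z sg_prob G y z = 1.
          by case: gG => Hr _ _; apply: (Hr y E).2.
        have hs : u' (inl y) = \sum_z sg_prob G y z * f z.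
          rewrite /u' (vm_RAND gA _ (inl y) E) (GA_rand s _ v); last first.
            by move=> e'; rewrite Hvinr.
          by [].
        have hsum : c <= \sum_z sg_prob G y z * f z.
          by rewrite -hs (Kz y Ky) lexx.
        have := avg_eq (sg_prob G y) f c p0 p1 hf hsum (val e).2 hp.
        have hin : (y, (val e).2) \in A.
          by rewrite -(eqP h1) -surjective_pairing; exact: valP e.
        rewrite /f hin => hv.
        have Ks : K (val e).2 by apply: Hk1; rewrite /trans E.
        by move: (Klt _ Ks); rewrite hv ltxx.
      + by case: (Kns y Ky).
    have h0 := pv_closed gA (tstrat A s') tA KA KAns KAcl (inl xm) Kxm.
    have := vm_resp gA (tstrat A s') tA HtA (inl xm).
    rewrite -/u' h0 (Kz xm Kxm) => hc.
    by move: (lt_le_trans c_pos hc); rewrite ltxx.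
split.
  by move=> x /=; exact: le_trans (hvu' x) (hd x).
exists x0 => /=.
have Hlt : v x0 < u' (inl x0) by rewrite -hu lt_neqAle Hne Hle.
by rewrite neq_lt (lt_le_trans Hlt (hd x0)).
Qed.
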